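(* For every sufficiently small $\varepsilon>0$ there exists $\gamma_0>0$ such that for every $\gamma\in(0,\gamma_0]$ there exists $n_0$ such that for all $n\ge n_0$: if $G$ is a graph on $n$ vertices with $\delta(G)\ge n/2$ that is $\gamma$-close to $2K_{n/2}$, then $G$ is an $\varepsilon$-superextremal two-clique with some partition $V(G)=A\uplus B$ satisfying (A1)–(A5), and moreover, either every vertex of $G$ has at least one neighbour in the other part (i.e. $G[A,B]$ has minimum degree at least $1$), or every vertex of one of the parts $A$, $B$ has at least $2$ neighbours in the other part.
   Context: A graph $G$ on $n$ vertices is $\gamma$-close to $2K_{n/2}$ if there exists $A\subseteq V(G)$ with $|A|=\lfloor n/2\rfloor$ such that the number of edges between $A$ and $V(G)\setminus A$ is at most $\gamma n^2$. For $X\subseteq V(G)$, $d(v,X)$ is the number of neighbours of $v$ in $X$. A graph $G$ on $n$ vertices is an $\varepsilon$-superextremal two-clique if there is a partition $V(G)=A\uplus B$ with: (A1) $||A|-|B||\le\varepsilon n$; (A2) $d(a,A)\ge(1/2-\varepsilon)n$ for all but at most $\varepsilon n$ vertices $a\in A$; (A3) $d(a,A)\ge(1/4-\varepsilon)n$ for all $a\in A$; (A4) $d(b,B)\ge(1/2-\varepsilon)n$ for all but at most $\varepsilon n$ vertices $b\in B$; (A5) $d(b,B)\ge(1/4-\varepsilon)n$ for all $b\in B$. *)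

(* Defs.v *)
(* Graphs on n vertices: vertex set 'I_n, edges given by a
   symmetric irreflexive boolean relation. Real parameters live in an
   arbitrary archimedean real field R (e.g. rat, or the reals). *)
From HB Require Import structures.
From mathcomp Require Import all_boot all_order all_algebra.
Set Implicit Arguments. Unset Strict Implicit. Unset Printing Implicit Defensive.
Import Order.TTheory GRing.Theory Num.Theory.
Local Open Scope ring_scope.

Definition simple_graph (n : nat) (e : rel 'I_n) : Prop :=
  symmetric e /\ irreflexive e.

Definition dX (n : nat) (e : rel 'I_n) (v : 'I_n) (X : {set 'I_n}) : nat :=
  #|[set u in X | e v u]|.

Definition deg (n : nat) (e : rel 'I_n) (v : 'I_n) : nat := dX e v [set: 'I_n].

Definition min_deg_half (R : realFieldType) (n : nat) (e : rel 'I_n) : Prop :=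
  forall v : 'I_n, (n%:R / 2 : R) <= (deg e v)%:R.

Definition cut_size (n : nat) (e : rel 'I_n) (A : {set 'I_n}) : nat :=
  #|[set p : 'I_n * 'I_n | (p.1 \in A) && (p.2 \notin A) && e p.1 p.2]|.

Definition gamma_close (R : realFieldType) (gamma : R) (n : nat) (e : rel 'I_n) : Prop :=
  exists A : {set 'I_n}, #|A| = n./2 /\ ((cut_size e A)%:R <= gamma * (n%:R) ^+ 2).

Definition superextremal_partition (R : realFieldType) (eps : R) (n : nat)
    (e : rel 'I_n) (A B : {set 'I_n}) : Prop :=
  [/\ `|(#|A|%:R - #|B|%:R : R)| <= eps * n%:R,
      (#|[set a in A | (dX e a A)%:R < (1 / 2 - eps) * n%:R]|%:R <= eps * n%:R),
      (forall a, a \in A -> (1 / 4 - eps) * n%:R <= (dX e a A)%:R),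
      (#|[set b in B | (dX e b B)%:R < (1 / 2 - eps) * n%:R]|%:R <= eps * n%:R)
    & (forall b, b \in B -> (1 / 4 - eps) * n%:R <= (dX e b B)%:R)].

Definition is_partition (n : nat) (A B : {set 'I_n}) : Prop :=
  A :&: B = set0 /\ A :|: B = [set: 'I_n].

(* Main.v *)
Require Import Defs.
From HB Require Import structures.
From mathcomp Require Import all_boot all_order all_algebra.
From mathcomp Require Import zify ring lra.
Import Order.TTheory GRing.Theory Num.Theory.

Lemma dX_sum n (e : rel 'I_n) v (X : {set 'I_n}) : dX e v X = \sum_(u in X) (e v u : nat).
Proof.
rewrite /dX -sum1_card big_mkcond [RHS]big_mkcond /=.
by apply: eq_bigr => u _; rewrite inE; case: (u \in X); case: (e v u).
Qed.

Lemma dX_split n (e : rel 'I_n) v (X : {set 'I_n}) : dX e v X + dX e v (~:X) = deg e v.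
Proof.
rewrite /deg !dX_sum [RHS](big_setID X) /= setTI setTD.
by [].
Qed.

Lemma dX_self n (e : rel 'I_n) v (X : {set 'I_n}) : irreflexive e -> v \in X -> (dX e v X).+1 <= #|X|.
Proof.
move=> irr vX; rewrite (cardsD1 v X) vX add1n ltnS /dX.
apply: subset_leq_card; apply/subsetP => u; rewrite !inE => /andP[uX evu].
rewrite uX andbT; apply/eqP => uv; by rewrite uv irr in evu.
Qed.

Lemma dX_mono n (e : rel 'I_n) v (X Y : {set 'I_n}) : dX e v X <= dX e v Y + #|X :\: Y|.
Proof.
rewrite /dX; apply: leq_trans (leq_card_setU _ _).
apply: subset_leq_card; apply/subsetP => u; rewrite !inE => /andP[uX ->].
rewrite uX andbT; by case: (u \in Y).
Qed.

Lemma sum_cut n (e : rel 'I_n) (A0 : {set 'I_n}) : symmetric e ->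
  \sum_(a in A0) dX e a (~:A0) = cut_size e A0 /\
  \sum_(b in ~:A0) dX e b A0 = cut_size e A0.
Proof.
move=> sym.
have E : \sum_(a in A0) dX e a (~:A0) = cut_size e A0.
  rewrite /cut_size -sum1_card [RHS]big_mkcond /=.
  transitivity (\sum_(i : 'I_n) \sum_(j : 'I_n) (if (i \in A0) && (j \notin A0) && e i j then 1 else 0)%N); last first.
    by rewrite pair_bigA /=; apply: eq_bigr => [[i j]] _; rewrite inE.
  rewrite big_mkcond; apply: eq_bigr => i _; rewrite dX_sum.
  rewrite big_mkcond /=; case: (i \in A0) => /=.
    by apply: eq_bigr => j _; rewrite !inE; case: (j \in A0); case: (e i j).
  by rewrite big1.
split=> //; rewrite -E.
under eq_bigr do rewrite dX_sum.
rewrite exchange_big /=; apply: eq_bigr => i _; rewrite dX_sum.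
by apply: eq_bigr => j _; rewrite sym.
Qed.

Local Open Scope ring_scope.

Lemma count_bound (R : numDomainType) n (S X : {set 'I_n}) (f : 'I_n -> nat) (t : R) :
  S \subset X -> (forall v, v \in S -> t <= (f v)%:R) ->
  #|S|%:R * t <= (\sum_(v in X) f v)%:R.
Proof.
move=> sub h.
apply: (@le_trans _ _ (\sum_(v in S) (f v)%:R)).
  rewrite mulr_natl -sumr_const; exact: ler_sum.
rewrite -natr_sum ler_nat [X in (_ <= X)%N](big_setID S) /= (setIidPr sub).
exact: leq_addr.
Qed.

Lemma natR_le (R : numDomainType) a b c : (a <= b + c)%N -> a%:R <= b%:R + c%:R :> R.
Proof. by rewrite -natrD ler_nat. Qed.
Lemma natR_le1 (R : numDomainType) a b : (a <= b)%N -> a%:R <= b%:R :> R.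
Proof. by rewrite ler_nat. Qed.

Lemma cross_bound n (e : rel 'I_n) (X : {set 'I_n}) v : irreflexive e ->
  (n <= 2 * deg e v)%N -> v \in X -> (n + 2 <= 2 * #|X| + 2 * dX e v (~:X))%N.
Proof.
move=> irr hd vX; have h1 := dX_self _ e v X irr vX; have h2 := dX_split _ e v X; lia.
Qed.

Lemma real_bound (R : realFieldType) (g eps x n c : R) : 0 <= x -> 2 < eps*n ->
  g <= eps*eps/16 -> x*(eps/2*n) <= c -> c <= g * n^+2 -> x <= eps*n/8.
Proof. move=> h0 h1 h2 h3 h4; nra. Qed.
Lemma hk_lemma (R : realFieldType) (eps N : R) : 0 < eps -> 2/eps < N -> 2 < eps*N.
Proof.
move=> h0 h1; have h3 : eps * eps^-1 = 1 by rewrite mulfV // gt_eqF.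
nra.
Qed.
Lemma hkn_lemma (R : realFieldType) (eps n : R) : 0 < eps -> eps <= 1/4 -> 0 <= n -> eps*n <= n/4.
Proof. move=> *; nra. Qed.
Lemma g0_lemma (R : realFieldType) (eps : R) : 0 < eps -> 0 < eps*eps/16.
Proof. move=> *; nra. Qed.

Lemma half_lemma n : (n./2 * 2 <= n <= n./2 * 2 + 1)%N.
Proof. have := odd_double_half n; rewrite -mul2n; case: (odd n) => /= h; lia. Qed.

Lemma conn2 n x d : (n + 2 <= 2*x + 2*d)%N -> (2*x < n)%N -> (2 <= d)%N.
Proof. lia. Qed.
Lemma conn1 n x d : (n + 2 <= 2*x + 2*d)%N -> (2*x = n)%N -> (1 <= d)%N.
Proof. lia. Qed.
Lemma compl_lt a b n : (a + b = n)%N -> (n < 2*a)%N -> (2*b < n)%N.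
Proof. lia. Qed.
Lemma compl_eq a b n : (a + b = n)%N -> (2*a = n)%N -> (2*b = n)%N.
Proof. lia. Qed.

Theorem mainTheorem7 (R : archiRealFieldType) :
  exists2 eps0 : R, 0 < eps0 &
  forall eps : R, 0 < eps -> eps <= eps0 ->
  exists2 gamma0 : R, 0 < gamma0 &
  forall gamma : R, 0 < gamma -> gamma <= gamma0 ->
  exists n0 : nat, forall n : nat, (n0 <= n)%N ->
  forall e : rel 'I_n,
    simple_graph e ->
    min_deg_half R e ->
    gamma_close gamma e ->
    exists A B : {set 'I_n},
      [/\ is_partition A B,
          superextremal_partition eps e A B
        & [\/ (forall a, a \in A -> (1 <= dX e a B)%N) /\
              (forall b, b \in B -> (1 <= dX e b A)%N),
              (forall a, a \in A -> (2 <= dX e a B)%N)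
            | (forall b, b \in B -> (2 <= dX e b A)%N)]].
Proof.
exists (1/4); first lra.
move=> eps eps0 epsle.
exists (eps * eps / 16); first exact: g0_lemma.
move=> gamma g0 gle.
exists (Num.bound (2 / eps)) => n hn e [sym irr] hmin [A0 [hA0 hcut]].
have hn0 : 0 <= n%:R :> R by exact: ler0n.
have hk : 2 < eps * n%:R.
  have h1 := archi_boundP (ltW (divr_gt0 (ltr0Sn R 1) eps0)).
  have h2 : (Num.bound (2 / eps))%:R <= n%:R :> R by rewrite ler_nat.
  exact: hk_lemma (lt_le_trans h1 h2).
have hkn : eps * n%:R <= n%:R / 4 by exact: hkn_lemma.
have hdegN : forall v, (n <= 2 * deg e v)%N.
  move=> v; rewrite -(ler_nat R) natrM; have := hmin v; lra.
have hdegR : forall v, n%:R <= 2 * ((dX e v A0)%:R + (dX e v (~:A0))%:R) :> R.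
  move=> v; rewrite -natrD dX_split; have := hmin v; lra.
pose A := [set v | (dX e v (~:A0) <= dX e v A0)%N].
have inA : forall v, (v \in A) = (dX e v (~:A0) <= dX e v A0)%N by move=> v; rewrite inE.
clearbody A.
pose SA := [set a in A0 | eps / 2 * n%:R <= (dX e a (~:A0))%:R].
have inSA : forall v, (v \in SA) = (v \in A0) && (eps / 2 * n%:R <= (dX e v (~:A0))%:R) by move=> v; rewrite inE.
pose SB := [set b in ~:A0 | eps / 2 * n%:R <= (dX e b A0)%:R].
have inSB : forall v, (v \in SB) = (v \notin A0) && (eps / 2 * n%:R <= (dX e v A0)%:R) by move=> v; rewrite !inE.
clearbody SA SB.
have [c1 c2] := sum_cut _ e A0 sym.
have hSA : #|SA|%:R <= eps * n%:R / 8 :> R.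
  have h := count_bound R n SA A0 (fun v => dX e v (~:A0)) (eps/2*n%:R).
  rewrite c1 in h.
  have {}h : #|SA|%:R * (eps/2*n%:R) <= gamma * n%:R ^+ 2.
    apply: le_trans hcut; apply: h.
      by apply/subsetP => v; rewrite inSA => /andP[].
    by move=> v; rewrite inSA => /andP[].
  exact: real_bound (ler0n _ _) hk gle h (lexx _).
have hSB : #|SB|%:R <= eps * n%:R / 8 :> R.
  have h := count_bound R n SB (~:A0) (fun v => dX e v A0) (eps/2*n%:R).
  rewrite c2 in h.
  have {}h : #|SB|%:R * (eps/2*n%:R) <= gamma * n%:R ^+ 2.
    apply: le_trans hcut; apply: h.
      by apply/subsetP => v; rewrite inSB in_setC => /andP[].
    by move=> v; rewrite inSB => /andP[].
  exact: real_bound (ler0n _ _) hk gle h (lexx _).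
have F1 : forall v, v \in A0 -> v \notin SA -> v \in A.
  move=> v vA0; rewrite inSA vA0 /= -ltNge => h.
  rewrite inA -(ler_nat R); have := hdegR v; lra.
have F2 : forall v, v \notin A0 -> v \notin SB -> v \notin A.
  move=> v vA0; rewrite inSB vA0 /= -ltNge => h.
  rewrite inA -ltnNge -(ltr_nat R); have := hdegR v; lra.
have hsubA : A0 :\: A \subset SA.
  apply/subsetP => v; rewrite inE => /andP[vnA vA0]; apply/negPn/negP => vS.
  by rewrite (F1 v vA0 vS) in vnA.
have hsubB : (~:A0) :\: (~:A) \subset SB.
  apply/subsetP => v; rewrite !inE negbK => /andP[vA vA0]; apply/negPn/negP => vS.
  by rewrite (negbTE (F2 v vA0 vS)) in vA.
have hdA : forall v, (dX e v A0 <= dX e v A + #|SA|)%N.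
  move=> v; apply: leq_trans (dX_mono _ e v A0 A) _.
  by rewrite leq_add2l subset_leq_card.
have hdB : forall v, (dX e v (~:A0) <= dX e v (~:A) + #|SB|)%N.
  move=> v; apply: leq_trans (dX_mono _ e v (~:A0) (~:A)) _.
  by rewrite leq_add2l subset_leq_card.
have hc1 : (#|A0| <= #|A| + #|SA|)%N.
  by rewrite -(cardsID A A0) leq_add // ?subset_leq_card // subsetIr.
have hc2 : (#|A| <= #|A0| + #|SB|)%N.
  rewrite -(cardsID A0 A) leq_add // ?subset_leq_card ?subsetIr //.
  apply: subset_trans hsubB; apply/subsetP => v; rewrite !inE negbK.
  by case/andP => -> ->.
have hcn : (#|A| + #|~:A| = n)%N by rewrite cardsC card_ord.
have ho := half_lemma n.
exists A; exists (~:A); split.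
- by rewrite /is_partition setICr setUCr.
- split.
  + rewrite ler_norml.
    have h1 := natR_le R _ _ _ hc1; have h2 := natR_le R _ _ _ hc2.
    have h3 : (#|A|%:R + #|~:A|%:R = n%:R :> R) by rewrite -natrD hcn.
    move/andP: ho => [o1 o2].
    have o1' := natR_le1 R _ _ o1; have o2' := natR_le R _ _ _ o2.
    rewrite natrM in o1'; rewrite natrM in o2'.
    rewrite hA0 in h1 h2.
    apply/andP; split; lra.
  + apply: (le_trans (y := (#|SA| + #|SB|)%:R)); last by rewrite natrD; lra.
    rewrite ler_nat; apply: leq_trans (leq_card_setU SA SB).
    apply: subset_leq_card; apply/subsetP => v; rewrite inE => /andP[vA hlt].
    rewrite inE; apply/negPn/negP; rewrite negb_or => /andP[nSA nSB].
    case vA0: (v \in A0).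
    * move: nSA; rewrite inSA vA0 /= -ltNge => h.
      have := natR_le R _ _ _ (hdA v); have := hdegR v; lra.
    * by rewrite (negbTE (F2 v (negbT vA0) nSB)) in vA.
  + move=> a aA; rewrite inA in aA; have h := natR_le1 R _ _ aA.
    have := natR_le R _ _ _ (hdA a); have := hdegR a; lra.
  + apply: (le_trans (y := (#|SA| + #|SB|)%:R)); last by rewrite natrD; lra.
    rewrite ler_nat; apply: leq_trans (leq_card_setU SA SB).
    apply: subset_leq_card; apply/subsetP => v; rewrite inE => /andP[vA hlt].
    rewrite inE; apply/negPn/negP; rewrite negb_or => /andP[nSA nSB].
    case vA0: (v \in A0).
    * by rewrite in_setC (F1 v vA0 nSA) in vA.
    * move: nSB; rewrite inSB vA0 /= -ltNge => h.
      have := natR_le R _ _ _ (hdB v); have := hdegR v; lra.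
  + move=> b; rewrite in_setC inA -ltnNge => bA; have h := natR_le1 R _ _ (ltnW bA).
    have := natR_le R _ _ _ (hdB b); have := hdegR b; lra.
- have hcb := fun X v => cross_bound n e X v irr (hdegN v).
  case: (ltngtP (2 * #|A|) n) => hAn.
  + apply: Or32 => a aA; exact: conn2 (hcb A a aA) hAn.
  + apply: Or33 => b bA; have := hcb (~:A) b bA; rewrite setCK => h.
    exact: conn2 h (compl_lt _ _ _ hcn hAn).
  + apply: Or31; split.
      move=> a aA; exact: conn1 (hcb A a aA) hAn.
    move=> b bA; have := hcb (~:A) b bA; rewrite setCK => h.
    exact: conn1 h (compl_eq _ _ _ hcn hAn).
Qed.
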